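(* Let $\mathbb{X}$ be a two-dimensional real Banach space, $z\in S_{\mathbb{X}}$ and $\epsilon\in[0,1)$. Then the set $A=\left[\bigcup_{\alpha\in\mathbb{R}}\overline{B}(\alpha z,\epsilon)\right]\cap S_{\mathbb{X}}$ has at most two connected components.
   Context: $\overline{B}(w,\epsilon)=\{u\in\mathbb{X}:\|u-w\|\leq\epsilon\}$ and $S_{\mathbb{X}}$ is the unit sphere of $\mathbb{X}$. *)

(* Defs.v *)
From HB Require Import structures.
From mathcomp Require Import all_boot all_order all_algebra.
From mathcomp Require Import all_classical all_reals all_analysis.
Set Implicit Arguments. Unset Strict Implicit. Unset Printing Implicit Defensive.
Import Order.TTheory GRing.Theory Num.Theory.
Import numFieldNormedType.Exports.
Local Open Scope classical_set_scope.
Local Open Scope ring_scope.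

Definition two_dimensional (R : realType) (V : lmodType R) : Prop :=
  exists e1 e2 : V,
    (forall a b : R, a *: e1 + b *: e2 = 0 -> a = 0 /\ b = 0) /\
    (forall x : V, exists a b : R, x = a *: e1 + b *: e2).

Definition cball (R : realType) (V : normedModType R) (w : V) (eps : R) : set V :=
  [set u | `|u - w| <= eps].

Definition usphere (R : realType) (V : normedModType R) : set V :=
  [set u | `|u| = 1].

Definition setA (R : realType) (V : normedModType R) (z : V) (eps : R) : set V :=
  (\bigcup_(alpha in [set: R]) cball (alpha *: z) eps) `&` @usphere R V.

Definition at_most_two_components (T : topologicalType) (A : set T) : Prop :=
  forall x y w, A x -> A y -> A w ->
    connected_component A x = connected_component A y \/
    connected_component A x = connected_component A w \/
    connected_component A y = connected_component A w.

(* Main.v *)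
Require Import Defs.
From HB Require Import structures.
From mathcomp Require Import all_boot all_order all_algebra.
From mathcomp Require Import all_classical all_reals all_analysis.
From mathcomp Require Import ring lra.
Import Order.TTheory GRing.Theory Num.Theory.
Import numFieldNormedType.Exports.
Local Open Scope classical_set_scope.
Local Open Scope ring_scope.

Section Key.
Variables (R : realType) (X : normedModType R).

Lemma key (z u : X) (eps alpha : R) : `|z| = 1 -> `|u| = 1 -> 0 <= alpha ->
  eps < 1 -> `|u - alpha *: z| <= eps -> connected_component (setA z eps) u z.
Proof.
move=> hz hu ha0 he1 hd.
have apos : 0 < alpha.
  rewrite lt_neqAle ha0 andbT; apply/eqP => a0.
  by move: hd; rewrite -a0 scale0r subr0 hu => /(lt_le_trans he1); rewrite ltxx.
pose w := fun s : R => (1 - s) *: u + s *: z.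
have bnd : forall s, 0 <= s <= 1 -> alpha * (1 - s) + s * (1 - eps) <= alpha * `|w s|.
  move=> s /andP[s0 s1].
  have e : (alpha * (1 - s) + s) *: u = alpha *: w s + s *: (u - alpha *: z).
    rewrite /w scalerDr scalerBr !scalerA scalerDl (mulrC s alpha).
    by rewrite addrACA subrr addr0.
  have := ler_normD (alpha *: w s) (s *: (u - alpha *: z)).
  rewrite -e !normrZ hu mulr1 (ger0_norm ha0) (ger0_norm s0).
  have : 0 <= alpha * (1 - s) + s by rewrite addr_ge0 // mulr_ge0 // subr_ge0.
  move=> /ger0_norm ->.
  have : s * `|u - alpha *: z| <= s * eps by rewrite ler_wpM2l.
  move=> h1 h2; rewrite mulrBr mulr1; lra.
have wpos : forall s, 0 <= s <= 1 -> 0 < `|w s|.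
  move=> s hs; have := bnd s hs; case/andP: hs => s0 s1.
  have [->|sn0] := eqVneq s 0.
    by rewrite subr0 !mulr1 mul0r addr0 => h; rewrite -(pmulr_rgt0 _ apos); exact: lt_le_trans apos h.
  have sp : 0 < s by rewrite lt_neqAle eq_sym sn0 s0.
  have : 0 < s * (1 - eps) by rewrite mulr_gt0 // subr_gt0.
  have : 0 <= alpha * (1 - s) by rewrite mulr_ge0 // subr_ge0.
  move=> h1 h2 h3; rewrite -(pmulr_rgt0 _ apos); lra.
have wge : forall s, 0 <= s <= 1 -> 1 - s <= `|w s|.
  move=> s hs; have := bnd s hs; case/andP: hs => s0 s1 h.
  have : 0 <= s * (1 - eps) by rewrite mulr_ge0 // subr_ge0 ltW.
  move=> h2; rewrite -(ler_pM2l apos); lra.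
pose p := fun s : R => `|w s|^-1 *: w s.
pose B := p @` `[0, 1]%classic.
have Bsub : B `<=` setA z eps.
  move=> _ [s hs <-]; move: hs; rewrite /= in_itv /= => hs.
  have wp := wpos s hs; have wg := wge s hs.
  split; last first.
    by rewrite /usphere /= /p normrZ normrV ?unitfE ?gt_eqF // normr_id mulVf // gt_eqF.
  exists ((s + (1 - s) * alpha) / `|w s|) => //.
  rewrite /cball /= /p.
  have -> : `|w s|^-1 *: w s - (s + (1 - s) * alpha) / `|w s| *: z =
            `|w s|^-1 *: ((1 - s) *: (u - alpha *: z)).
    rewrite /w (mulrC _ (`|w s|^-1)) -scalerA -scalerBr; congr (_ *: _).
    by rewrite scalerBr scalerA [(s + _) *: z]scalerDl opprD addrA addrK.
  case/andP: hs => s0 s1.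
  have h1s : 0 <= 1 - s by rewrite subr_ge0.
  rewrite normrZ normrZ normrV ?unitfE ?gt_eqF // normr_id (ger0_norm h1s).
  rewrite mulrC ler_pdivrMr //.
  have : (1 - s) * `|u - alpha *: z| <= (1 - s) * eps by rewrite ler_wpM2l.
  have : (1 - s) * eps <= `|w s| * eps by rewrite ler_wpM2r // (le_trans _ hd).
  by move=> h1 h2; rewrite [eps * _]mulrC; exact: le_trans h2 h1.
have Bc : connected B.
  apply: connected_continuous_connected; first exact: segment_connected.
  apply: continuous_in_subspaceT => s; rewrite inE /= in_itv /= => hs.
  have wc : w x @[x --> s] --> w s.
    apply: cvgD; apply: cvgZ; try apply: cvgB; try apply: cvg_cst; exact: cvg_id.
  apply: cvgZ => //; apply: cvgV; first by rewrite gt_eqF // wpos.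
  exact: cvg_norm.
have Bu : B u.
  exists 0; first by rewrite /= in_itv /= lexx ler01.
  by rewrite /p /w subr0 scale1r scale0r addr0 hu invr1 scale1r.
have Bz : B z.
  exists 1; first by rewrite /= in_itv /= lexx ler01.
  by rewrite /p /w subrr scale0r scale1r add0r hz invr1 scale1r.
exact: (connected_component_max Bu Bsub Bc).
Qed.

End Key.

Lemma setA_opp (R : realType) (X : normedModType R) (z : X) (eps : R) :
  setA (- z) eps = setA z eps.
Proof.
rewrite /setA; congr (_ `&` _); apply/seteqP; split=> x [a _ h]; exists (- a) => //.
  by move: h; rewrite /cball /= scalerN -scaleNr.
by move: h; rewrite /cball /= scalerN scaleNr opprK.
Qed.

Theorem lemma2p2 (R : realType) (X : completeNormedModType R)
  (hdim : two_dimensional X) (z : X) (hz : `|z| = 1) (eps : R)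
  (heps0 : 0 <= eps) (heps1 : eps < 1) :
  at_most_two_components (setA z eps).
Proof.
move=> x y w Ax Ay Aw.
have H : forall v, setA z eps v ->
    connected_component (setA z eps) v = connected_component (setA z eps) z \/
    connected_component (setA z eps) v = connected_component (setA z eps) (- z).
  move=> v [[a _ hv] hv1]; case: (leP 0 a) => ha.
    by left; apply: same_connected_component; exact: key hz hv1 ha heps1 hv.
  right; rewrite -(@setA_opp _ _ z eps); apply: same_connected_component.
  apply: (@key _ _ _ _ _ (- a)) => //; first by rewrite normrN.
    by rewrite oppr_ge0 ltW.
  by rewrite scalerN scaleNr opprK.
case: (H x Ax) => ->; case: (H y Ay) => ->; case: (H w Aw) => ->; tauto.
Qed.
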